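(* Let $(A,\succ,\prec)$ be an anti-pre-Novikov algebra and $\omega$ a non-degenerate bilinear form on $A$. Let $\omega^\sharp:A\to A^*$ be given by $\langle\omega^\sharp(x),y\rangle=\omega(x,y)$ and let $s_\omega\in A\otimes A$ be the element with $T_{s_\omega}=(\omega^\sharp)^{-1}$. Then $(A,\succ,\prec,\omega)$ is a quadratic anti-pre-Novikov algebra if and only if $s_\omega$ is symmetric and invariant.
   Context: $A$ is finite-dimensional over a field $k$. An anti-pre-Novikov algebra is $(A,\succ,\prec)$ such that with $x\circ y=x\succ y+x\prec y$: $(x\circ y-y\circ x)\succ z=y\succ(x\succ z)-x\succ(y\succ z)$; $x\prec(y\circ z)=(y\succ x)\prec z-(x\prec y)\prec z-y\succ(x\prec z)$; $(x\circ y)\succ z=-(x\succ z)\prec y$; $(x\prec y)\prec z=(x\prec z)\prec y$; $(x\circ y-y\circ x)\prec z=x\succ(y\circ z)-y\succ(x\circ z)$. It is quadratic with respect to $\omega$ if $\omega$ is non-degenerate, symmetric, and $\omega(x\prec y,z)=-\omega(x,z\circ y)$, $\omega(x\succ y,z)=\omega(x\circ z+z\circ x,y)$ for all $x,y,z$. For $r\in A\otimes A$, $T_r:A^*\to A$ is $\langle T_r(\zeta),\eta\rangle=\langle r,\zeta\otimes\eta\rangle$; $r$ is symmetric if $\tau(r)=r$ ($\tau$ the flip). With $L_\ast(x)y=x\ast y$, $R_\ast(x)y=y\ast x$, $x\odot y=x\succ y+y\prec x$, $L_{\star}=L_{\circ}+R_{\circ}$, $L_{\odot}=L_{\succ}+R_{\prec}$: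 $r$ is invariant if $(I\otimes L_{\star}(x)-L_{\succ}(x)\otimes I)r=0$ and $(L_{\circ}(x)\otimes I-I\otimes L_{\odot}(x))r=0$ for all $x\in A$. *)

(* Defs.v *)
(* A finite-dimensional k-vector space A is modelled as
   'rV[K]_n (coordinates in a fixed basis e_i = delta_mx 0 i); A* as 'rV[K]_n
   with the dual-basis pairing; A (x) A as 'M[K]_n (r = sum r_ij e_i (x) e_j). *)
From HB Require Import structures.
From mathcomp Require Import all_boot all_order all_algebra.
Set Implicit Arguments. Unset Strict Implicit. Unset Printing Implicit Defensive.
Import GRing.Theory.
Local Open Scope ring_scope.

Section Defs.
Variables (K : fieldType) (n : nat).
Notation A := 'rV[K]_n.

Definition bilinear_op (f : A -> A -> A) : Prop :=
  (forall (a : K) x y z, f (a *: x + y) z = a *: f x z + f y z) /\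
  (forall (a : K) x y z, f z (a *: x + y) = a *: f z x + f z y).

Definition bilinear_form (w : A -> A -> K) : Prop :=
  (forall (a : K) x y z, w (a *: x + y) z = a * w x z + w y z) /\
  (forall (a : K) x y z, w z (a *: x + y) = a * w z x + w z y).

Definition ebase (i : 'I_n) : A := delta_mx 0 i.

Definition omega_sharp (w : A -> A -> K) (x : A) : 'rV[K]_n :=
  \row_j w x (ebase j).

(* T_r : A* -> A,  <T_r(zeta), eta> = <r, zeta (x) eta> *)
Definition Tr (r : 'M[K]_n) (zeta : 'rV[K]_n) : A := zeta *m r.

(* (f (x) g) r for maps f g : A -> A *)
Definition tmap (f g : A -> A) (r : 'M[K]_n) : 'M[K]_n :=
  \matrix_(k, l) \sum_i \sum_j r i j * f (ebase i) 0 k * g (ebase j) 0 l.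

Definition tflip (r : 'M[K]_n) : 'M[K]_n := r^T.

Section Ops.
Variables (succ prec : A -> A -> A).
Definition circ x y := succ x y + prec x y.

Definition anti_pre_Novikov : Prop :=
  (forall x y z, succ (circ x y - circ y x) z = succ y (succ x z) - succ x (succ y z)) /\
  (forall x y z, prec x (circ y z) =
       prec (succ y x) z - prec (prec x y) z - succ y (prec x z)) /\
  (forall x y z, succ (circ x y) z = - prec (succ x z) y) /\
  (forall x y z, prec (prec x y) z = prec (prec x z) y) /\
  (forall x y z, prec (circ x y - circ y x) z = succ x (circ y z) - succ y (circ x z)).

Definition nondeg_form (w : A -> A -> K) : Prop :=
  forall x, (forall y, w x y = 0) -> x = 0.

Definition quadratic_form_APN (w : A -> A -> K) : Prop :=
  nondeg_form w /\ (forall x y, w x y = w y x) /\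
  (forall x y z, w (prec x y) z = - w x (circ z y)) /\
  (forall x y z, w (succ x y) z = w (circ x z + circ z x) y).

Definition L_star (x : A) : A -> A := fun y => circ x y + circ y x.
Definition L_odot (x : A) : A -> A := fun y => succ x y + prec y x.
Definition L_succ (x : A) : A -> A := fun y => succ x y.
Definition L_circ (x : A) : A -> A := fun y => circ x y.

Definition invariant_tensor (r : 'M[K]_n) : Prop :=
  (forall x, tmap id (L_star x) r - tmap (L_succ x) id r = 0) /\
  (forall x, tmap (L_circ x) id r - tmap id (L_odot x) r = 0).
End Ops.
End Defs.

(* Main.v *)
Set Warnings "-notation-overridden,-ambiguous-paths".
Require Import Defs.
From HB Require Import structures.
From mathcomp Require Import all_boot all_order all_algebra.
Set Implicit Arguments. Unset Strict Implicit. Unset Printing Implicit Defensive.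
Import GRing.Theory.
Local Open Scope ring_scope.

Definition linS (K : fieldType) (n : nat) (h : 'rV[K]_n -> K) :=
  forall a x y, h (a *: x + y) = a * h x + h y.
Definition linV (K : fieldType) (n : nat) (f : 'rV[K]_n -> 'rV[K]_n) :=
  forall a x y, f (a *: x + y) = a *: f x + f y.

Lemma linS_sum (K : fieldType) (n : nat) (h : 'rV[K]_n -> K) x :
  linS h -> h x = \sum_i x 0 i * h (ebase K i).
Proof.
move=> Hh.
have h0 : h 0 = 0.
  have := Hh 1 0 0; rewrite scale1r addr0 mul1r.
  by rewrite -{1}(addr0 (h 0)) => /addrI <-.
have hadd : forall u v, h (u + v) = h u + h v by move=> u v; rewrite -{1}(scale1r u) Hh mul1r.
have hsc : forall a u, h (a *: u) = a * h u by move=> a u; rewrite -(addr0 (a *: u)) Hh h0 addr0.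
have : forall r : seq 'I_n, h (\sum_(i <- r) x 0 i *: ebase K i) = \sum_(i <- r) x 0 i * h (ebase K i).
  elim=> [|i r IH]; first by rewrite !big_nil h0.
  by rewrite !big_cons hadd hsc IH.
move=> /(_ (index_enum 'I_n)) <-.
by rewrite {1}(row_sum_delta x).
Qed.

Definition mat (K : fieldType) (n : nat) (f : 'rV[K]_n -> 'rV[K]_n) : 'M[K]_n :=
  \matrix_(i, j) f (ebase K i) 0 j.

Lemma linVE (K : fieldType) (n : nat) (f : 'rV[K]_n -> 'rV[K]_n) x :
  linV f -> f x = x *m mat f.
Proof.
move=> Hf; apply/rowP => k.
have Hk : linS (fun x => f x 0 k) by move=> a u v; rewrite Hf !mxE.
rewrite (linS_sum x Hk) !mxE; apply: eq_bigr => i _; by rewrite !mxE.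
Qed.

Lemma mat_id (K : fieldType) (n : nat) : mat (@id 'rV[K]_n) = 1%:M.
Proof. by apply/matrixP => i j; rewrite !mxE eqxx /= eq_sym. Qed.

Lemma tmapE (K : fieldType) (n : nat) (f g : 'rV[K]_n -> 'rV[K]_n) r :
  linV f -> linV g -> tmap f g r = (mat f)^T *m r *m mat g.
Proof.
move=> Hf Hg; apply/matrixP => k l; rewrite !mxE.
rewrite exchange_big /=; apply: eq_bigr => j _; rewrite !mxE big_distrl /=.
by apply: eq_bigr => i _; rewrite !mxE mulrAC [_ * f _ _ _]mulrC mulrA.
Qed.

Definition bil (K : fieldType) (n : nat) (M : 'M[K]_n) (y z : 'rV[K]_n) : K :=
  (y *m M *m z^T) 0 0.

Lemma bil_eq (K : fieldType) (n : nat) (M N : 'M[K]_n) :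
  (forall y z, bil M y z = bil N y z) -> M = N.
Proof.
move=> H; apply/matrixP => i j; have := H (delta_mx 0 i) (delta_mx 0 j).
by rewrite /bil trmx_delta -!rowE -!colE !mxE.
Qed.

Lemma bil_tr (K : fieldType) (n : nat) (M : 'M[K]_n) y z : bil M y z = bil M^T z y.
Proof.
rewrite /bil. have E : forall B : 'M[K]_1, B 0 0 = B^T 0 0 by move=> B; rewrite mxE. rewrite [LHS]E.
by rewrite !trmx_mul trmxK mulmxA.
Qed.

Lemma omega_bil (K : fieldType) (n : nat) (w : 'rV[K]_n -> 'rV[K]_n -> K) x y :
  bilinear_form w ->
  w x y = bil (\matrix_(i, j) w (ebase K i) (ebase K j)) x y.
Proof.
move=> [H1 H2].
have L1 : linS (fun x => w x y) by move=> a u v; rewrite H1.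
rewrite (linS_sum x L1) /bil !mxE.
under [RHS]eq_bigr => j _ do rewrite !mxE big_distrl.
rewrite [RHS]exchange_big /=; apply: eq_bigr => i _.
have L2 : linS (fun y => w (ebase K i) y) by move=> a u v; rewrite H2.
rewrite (linS_sum y L2) big_distrr /=; apply: eq_bigr => j _.
by rewrite !mxE mulrA [RHS]mulrAC.
Qed.

Lemma omega_sharpE (K : fieldType) (n : nat) (w : 'rV[K]_n -> 'rV[K]_n -> K) x :
  bilinear_form w ->
  omega_sharp w x = x *m (\matrix_(i, j) w (ebase K i) (ebase K j)).
Proof.
move=> [H1 H2].
have L : linV (omega_sharp w) by move=> a u v; apply/rowP => j; rewrite !mxE H1.
rewrite (linVE x L); congr (_ *m _); apply/matrixP => i j; by rewrite !mxE.
Qed.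

Lemma key (K : fieldType) (n : nat) (w : 'rV[K]_n -> 'rV[K]_n -> K) (W s : 'M[K]_n)
  (f g : 'rV[K]_n -> 'rV[K]_n) :
  (forall x y, w x y = bil W x y) -> W *m s = 1%:M -> s *m W = 1%:M ->
  linV f -> linV g ->
  (tmap f id s = tmap id g s <-> forall y z, w y (f z) = w (g y) z).
Proof.
move=> Hw Ws sW Hf Hg.
have Hid : linV (@id 'rV[K]_n) by [].
rewrite !tmapE // mat_id trmx1 mul1mx mulmx1.
have E1 : forall y z, w y (f z) = bil (W *m (mat f)^T) y z.
  by move=> y z; rewrite Hw (linVE z Hf) /bil trmx_mul !mulmxA.
have E2 : forall y z, w (g y) z = bil (mat g *m W) y z.
  by move=> y z; rewrite Hw (linVE y Hg) /bil !mulmxA.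
split.
- move=> E y z; rewrite E1 E2; congr bil.
  by rewrite -[LHS]mulmx1 -sW !mulmxA -[W *m _ *m s]mulmxA E mulmxA Ws mul1mx.
- move=> H.
  have E : W *m (mat f)^T = mat g *m W by apply: bil_eq => y z; rewrite -E1 -E2.
  rewrite -[LHS]mul1mx -sW -mulmxA [W *m (_ *m s)]mulmxA E !mulmxA.
  by rewrite -[s *m _ *m W *m s]mulmxA Ws mulmx1.
Qed.

Lemma symm_eq (K : fieldType) (n : nat) (w : 'rV[K]_n -> 'rV[K]_n -> K) (W s : 'M[K]_n) :
  (forall x y, w x y = bil W x y) -> W *m s = 1%:M -> s *m W = 1%:M ->
  ((forall x y, w x y = w y x) <-> s^T = s).
Proof.
move=> Hw Ws sW.
have WT : (forall x y, w x y = w y x) <-> W^T = W.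
  split.
  - move=> H; apply: bil_eq => y z; by rewrite bil_tr trmxK -Hw H Hw.
  - by move=> E x y; rewrite !Hw bil_tr E.
split.
- move=> /WT E; rewrite -[LHS]mulmx1 -Ws mulmxA -E -trmx_mul Ws trmx1 mul1mx //.
- move=> E; apply/WT; rewrite -[LHS]mul1mx -Ws -mulmxA -E -trmx_mul Ws trmx1 mulmx1 //.
Qed.

Theorem mainTheorem14 (K : fieldType) (n : nat)
  (succ prec : 'rV[K]_n -> 'rV[K]_n -> 'rV[K]_n)
  (omega : 'rV[K]_n -> 'rV[K]_n -> K) (s : 'M[K]_n) :
  bilinear_op succ -> bilinear_op prec -> anti_pre_Novikov succ prec ->
  bilinear_form omega -> nondeg_form omega ->
  (forall x, Tr s (omega_sharp omega x) = x) ->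
  (forall zeta, omega_sharp omega (Tr s zeta) = zeta) ->
  (quadratic_form_APN succ prec omega <-> (tflip s = s /\ invariant_tensor succ prec s)).
Proof.
move=> [Hs1 Hs2] [Hp1 Hp2] _ Hbw Hnd HT1 HT2.
set W := \matrix_(i, j) omega (ebase K i) (ebase K j).
have Hw : forall x y, omega x y = bil W x y by move=> x y; apply: omega_bil.
have Ws : W *m s = 1%:M.
  apply/row_matrixP => i; rewrite rowE mulmxA -omega_sharpE //.
  by have := HT1 (delta_mx 0 i); rewrite /Tr => ->; rewrite rowE mulmx1.
have sW : s *m W = 1%:M.
  apply/row_matrixP => i; rewrite rowE mulmxA -omega_sharpE //.
  by have := HT2 (delta_mx 0 i); rewrite /Tr => ->; rewrite rowE mulmx1.
have [Hw1 Hw2] := Hbw.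
have wD1 : forall a b c, omega (a + b) c = omega a c + omega b c.
  by move=> a b c; rewrite -{1}(scale1r a) Hw1 mul1r.
have wD2 : forall a b c, omega c (a + b) = omega c a + omega c b.
  by move=> a b c; rewrite -{1}(scale1r a) Hw2 mul1r.
have lsucc : forall x, linV (L_succ succ x) by move=> x a u v; rewrite /L_succ Hs2.
have lcirc : forall x, linV (L_circ succ prec x).
  by move=> x a u v; rewrite /L_circ /circ Hs2 Hp2 scalerDr addrACA.
have lstar : forall x, linV (L_star succ prec x).
  move=> x a u v.
  have c1 : circ succ prec (a *: u + v) x = a *: circ succ prec u x + circ succ prec v x.
    by rewrite /circ Hs1 Hp1 scalerDr addrACA.
  have c2 := lcirc x a u v; rewrite /L_circ in c2.
  by rewrite /L_star c1 c2 [in RHS]scalerDr addrACA.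
have lodot : forall x, linV (L_odot succ prec x).
  by move=> x a u v; rewrite /L_odot Hs2 Hp1 scalerDr addrACA.
have I1 : forall x, tmap id (L_star succ prec x) s - tmap (L_succ succ x) id s = 0 <->
   forall y z, omega y (succ x z) = omega (L_star succ prec x y) z.
  move=> x; split => [/subr0_eq E|H].
  - by apply/(key Hw Ws sW (lsucc x) (lstar x)); rewrite E.
  - by rewrite (proj2 (key Hw Ws sW (lsucc x) (lstar x)) H) subrr.
have I2 : forall x, tmap (L_circ succ prec x) id s - tmap id (L_odot succ prec x) s = 0 <->
   forall y z, omega y (circ succ prec x z) = omega (L_odot succ prec x y) z.
  move=> x; split => [/subr0_eq E|H].
  - by apply/(key Hw Ws sW (lcirc x) (lodot x)).
  - by rewrite (proj2 (key Hw Ws sW (lcirc x) (lodot x)) H) subrr.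
have Sy := symm_eq Hw Ws sW.
rewrite /quadratic_form_APN /invariant_tensor /tflip.
split.
- move=> [_ [Hsym [Q1 Q2]]]; split; first by apply/Sy.
  split => x.
  + apply/I1 => y z; by rewrite Hsym Q2.
  + apply/I2 => y z; rewrite /L_odot wD1 (Q2 x y z) (Q1 y x z).
    by rewrite (Hsym (_ + _) y) wD2 addrK.
- move=> [Hst [J1 J2]].
  have Hsym : forall x y, omega x y = omega y x by apply/Sy.
  have Q2 : forall x y z, omega (succ x y) z = omega (circ succ prec x z + circ succ prec z x) y.
    by move=> x y z; rewrite Hsym (proj1 (I1 x) (J1 x)).
  split => //; split => //; split => // x y z.
  have E := proj1 (I2 y) (J2 y) x z.
  rewrite /L_odot wD1 (Q2 y x z) (Hsym _ x) wD2 in E.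
  set a := omega x (circ succ prec y z) in E *.
  set c := omega x (circ succ prec z y) in E *.
  set p := omega (prec x y) z in E *.
  have H : c + p = 0.
    by apply/(addrI a); rewrite addr0 addrA -E.
  by rewrite -(addKr c p) H addr0.
Qed.
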